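(* Let $\mathbf A,\mathbf B$ be complete perfect DqRAs and $h:\mathbf A\to\mathbf B$ a complete homomorphism. Define $h_+:J^\infty(\mathbf B)\to J^\infty(\mathbf A)$ by $h_+(b)=\bigwedge\{a\in A\mid b\leqslant h(a)\}$. Then: (i) $h_+$ is a DqRA-frame morphism from $\mathbf B_+$ to $\mathbf A_+$, i.e. in addition to being a DInFL-frame morphism it satisfies $h_+(b^\neg)=h_+(b)^\neg$ for all $b\in J^\infty(\mathbf B)$; (ii) if $h$ is surjective then $h_+$ is an order-embedding; (iii) if $h$ is injective then $h_+$ is surjective.
   Context: A DqRA is $(A,\wedge,\vee,\cdot,1,\sim,-,\neg)$ with $(A,\wedge,\vee)$ a distributive lattice, $(A,\cdot,1)$ a monoid, $a\cdot b\leqslant c\iff a\leqslant -(b\cdot{\sim}c)\iff b\leqslant{\sim}(-c\cdot a)$, $\neg\neg a=a$, $\neg(a\wedge b)=\neg a\vee\neg b$, and $\neg(a\cdot b)=\neg a+\neg b$ where $a+b=-({\sim}b\cdot{\sim}a)$. Complete perfect: complete, every element the join of completely join-irreducibles ($J^\infty$) below it and meet of completely meet-irreducibles above it. A complete homomorphism preserves all operations and arbitrary joins and meets. $\kappa(j)=\bigvee\{a\mid j\not\leqslant a\}$. $\mathbf A_+=(J^\infty(\mathbf A),I_1,\preccurlyeq,\circ,{}^\sim,{}^-,{}^\neg)$ with $I_1=\{i\in J^\infty(\mathbf A)\mid i\leqslant 1\}$, $a\preccurlyeq b$ iff $b\leqslant a$, $c\in a\circ b$ iff $c\leqslant a\cdot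 b$, $a^\sim={\sim}\kappa(a)$, $a^-=-\kappa(a)$, $a^\neg=\neg\kappa(a)$. A DInFL-frame morphism between $(W_1,I_1,\preccurlyeq_1,\circ_1,{}^{\sim_1},{}^{-_1})$ and $(W_2,I_2,\preccurlyeq_2,\circ_2,{}^{\sim_2},{}^{-_2})$ is $f:W_1\to W_2$ with, for all $x,y,z\in W_1$, $u,v\in W_2$: (M1) $x\preccurlyeq_1 y\Rightarrow f(x)\preccurlyeq_2 f(y)$; (M2) $z\in x\circ_1 y\Rightarrow f(z)\in f(x)\circ_2 f(y)$; (M3) if $f(z)\in u\circ_2 v$ then there exist $x,y$ with $u\preccurlyeq_2 f(x)$, $v\preccurlyeq_2 f(y)$, $z\in x\circ_1 y$; (M4) $f(x^{\sim_1})=f(x)^{\sim_2}$; (M5) $f(x^{-_1})=f(x)^{-_2}$; (M6) $I_1=f^{-1}[I_2]$. A DqRA-frame morphism additionally satisfies (M7) $f(x^{\neg_1})=f(x)^{\neg_2}$. *)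

(* Defs.v *)
Set Implicit Arguments.

Record DqRA := {
  car :> Type;
  dmeet : car -> car -> car;
  djoin : car -> car -> car;
  dmul  : car -> car -> car;
  done  : car;
  dtl   : car -> car;
  dmi   : car -> car;
  dneg  : car -> car;
  meetA : forall a b c, dmeet a (dmeet b c) = dmeet (dmeet a b) c;
  joinA : forall a b c, djoin a (djoin b c) = djoin (djoin a b) c;
  meetC : forall a b, dmeet a b = dmeet b a;
  joinC : forall a b, djoin a b = djoin b a;
  meet_absorb : forall a b, dmeet a (djoin a b) = a;
  join_absorb : forall a b, djoin a (dmeet a b) = a;
  meet_distr : forall a b c, dmeet a (djoin b c) = djoin (dmeet a b) (dmeet a c);
  mulA : forall a b c, dmul a (dmul b c) = dmul (dmul a b) c;
  mul1l : forall a, dmul done a = a;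
  mul1r : forall a, dmul a done = a;
  (* residuation: a.b <= c <-> a <= -(b.~c) <-> b <= ~(-c.a), where x <= y := x /\ y = x *)
  resid1 : forall a b c, dmeet (dmul a b) c = dmul a b <-> dmeet a (dmi (dmul b (dtl c))) = a;
  resid2 : forall a b c, dmeet (dmul a b) c = dmul a b <-> dmeet b (dtl (dmul (dmi c) a)) = b;
  negK : forall a, dneg (dneg a) = a;
  neg_meet : forall a b, dneg (dmeet a b) = djoin (dneg a) (dneg b);
  (* ¬(a.b) = ¬a + ¬b, with a + b := -(~b . ~a) *)
  neg_mul : forall a b, dneg (dmul a b) = dmi (dmul (dtl (dneg b)) (dtl (dneg a)))
}.

Arguments dmeet {d}. Arguments djoin {d}. Arguments dmul {d}. Arguments dtl {d}.
Arguments dmi {d}. Arguments dneg {d}.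

Definition dle {A : DqRA} (a b : A) : Prop := dmeet a b = a.

Definition is_lub {A : DqRA} (S : A -> Prop) (x : A) : Prop :=
  (forall s, S s -> dle s x) /\ (forall u, (forall s, S s -> dle s u) -> dle x u).
Definition is_glb {A : DqRA} (S : A -> Prop) (x : A) : Prop :=
  (forall s, S s -> dle x s) /\ (forall l, (forall s, S s -> dle l s) -> dle l x).

Record CDqRA := {
  dq :> DqRA;
  bigjoin : (dq -> Prop) -> dq;
  bigmeet : (dq -> Prop) -> dq;
  bigjoinP : forall S, is_lub S (bigjoin S);
  bigmeetP : forall S, is_glb S (bigmeet S)
}.

Arguments bigjoin {c}. Arguments bigmeet {c}.

Definition Jinf {A : CDqRA} (j : A) : Prop :=
  forall S : A -> Prop, j = @bigjoin A S -> S j.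
Definition Minf {A : CDqRA} (m : A) : Prop :=
  forall S : A -> Prop, m = @bigmeet A S -> S m.

Definition perfect (A : CDqRA) : Prop :=
  forall a : A,
    a = @bigjoin A (fun j => Jinf j /\ dle j a) /\
    a = @bigmeet A (fun m => Minf m /\ dle a m).

Definition image {A B : CDqRA} (h : A -> B) (S : A -> Prop) : B -> Prop :=
  fun b => exists a, S a /\ b = h a.

Definition complete_hom {A B : CDqRA} (h : A -> B) : Prop :=
  (forall a b, h (dmeet a b) = dmeet (h a) (h b)) /\
  (forall a b, h (djoin a b) = djoin (h a) (h b)) /\
  (forall a b, h (dmul a b) = dmul (h a) (h b)) /\
  h (done A) = done B /\
  (forall a, h (dtl a) = dtl (h a)) /\
  (forall a, h (dmi a) = dmi (h a)) /\
  (forall a, h (dneg a) = dneg (h a)) /\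
  (forall S, h (@bigjoin A S) = @bigjoin B (image h S)) /\
  (forall S, h (@bigmeet A S) = @bigmeet B (image h S)).

Definition kappa {A : CDqRA} (j : A) : A := @bigjoin A (fun a => ~ dle j a).

(** The dual frame A_+ = (J^oo(A), I_1, ≼, ∘, ^~, ^-, ^¬), with carrier J^oo(A)
    represented by the predicate Jinf on A. *)
Definition frI {A : CDqRA} (i : A) : Prop := Jinf i /\ dle i (done A).
Definition frle {A : CDqRA} (a b : A) : Prop := dle b a.
Definition frcomp {A : CDqRA} (c a b : A) : Prop := dle c (dmul a b). (* c ∈ a ∘ b *)
Definition frtl {A : CDqRA} (a : A) : A := dtl (kappa a).
Definition frmi {A : CDqRA} (a : A) : A := dmi (kappa a).
Definition frneg {A : CDqRA} (a : A) : A := dneg (kappa a).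

Definition DInFL_frame_morphism {A B : CDqRA} (f : A -> B) : Prop :=
  (forall x, Jinf x -> Jinf (f x)) /\
  (forall x y, Jinf x -> Jinf y -> frle x y -> frle (f x) (f y)) /\
  (forall x y z, Jinf x -> Jinf y -> Jinf z -> frcomp z x y -> frcomp (f z) (f x) (f y)) /\
  (forall z u v, Jinf z -> Jinf u -> Jinf v -> frcomp (f z) u v ->
     exists x y, Jinf x /\ Jinf y /\ frle u (f x) /\ frle v (f y) /\ frcomp z x y) /\
  (forall x, Jinf x -> f (frtl x) = frtl (f x)) /\
  (forall x, Jinf x -> f (frmi x) = frmi (f x)) /\
  (forall x, Jinf x -> (frI x <-> frI (f x))).

Definition DqRA_frame_morphism {A B : CDqRA} (f : A -> B) : Prop :=
  DInFL_frame_morphism f /\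
  (forall x, Jinf x -> f (frneg x) = frneg (f x)).

Definition hplus {A B : CDqRA} (h : A -> B) (b : B) : A :=
  @bigmeet A (fun a => dle b (h a)).

(* Main.v *)
Require Import Defs.
From Stdlib Require Import Classical.

Section L.
End L.

Lemma meet_idem {A : DqRA} (a : A) : dmeet a a = a.
Proof. pose proof (meet_absorb _ a (dmeet a a)) as H. rewrite join_absorb in H. exact H. Qed.

Lemma join_idem {A : DqRA} (a : A) : djoin a a = a.
Proof. pose proof (join_absorb _ a (djoin a a)) as H. rewrite meet_absorb in H. exact H. Qed.

Lemma le_refl {A : DqRA} (a : A) : dle a a.
Proof. apply meet_idem. Qed.

Lemma le_trans {A : DqRA} (a b c : A) : dle a b -> dle b c -> dle a c.
Proof. unfold dle; intros H1 H2. rewrite <- H1, <- meetA, H2. reflexivity. Qed.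

Lemma le_antisym {A : DqRA} (a b : A) : dle a b -> dle b a -> a = b.
Proof. unfold dle; intros H1 H2. rewrite <- H1, meetC. exact H2. Qed.

Lemma meet_lb1 {A : DqRA} (a b : A) : dle (dmeet a b) a.
Proof. unfold dle. rewrite (meetC _ a b), <- meetA, meet_idem. reflexivity. Qed.

Lemma meet_lb2 {A : DqRA} (a b : A) : dle (dmeet a b) b.
Proof. unfold dle. rewrite <- meetA, meet_idem. reflexivity. Qed.

Lemma meet_glb {A : DqRA} (a b c : A) : dle c a -> dle c b -> dle c (dmeet a b).
Proof. unfold dle; intros H1 H2. rewrite meetA, H1, H2. reflexivity. Qed.

Lemma le_join {A : DqRA} (a b : A) : dle a b <-> djoin a b = b.
Proof. unfold dle; split; intro H.
- rewrite <- H, joinC, meetC, join_absorb. reflexivity.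
- rewrite <- H, meet_absorb. reflexivity. Qed.

Lemma join_ub1 {A : DqRA} (a b : A) : dle a (djoin a b).
Proof. apply meet_absorb. Qed.

Lemma join_ub2 {A : DqRA} (a b : A) : dle b (djoin a b).
Proof. rewrite joinC. apply meet_absorb. Qed.

Lemma join_lub {A : DqRA} (a b c : A) : dle a c -> dle b c -> dle (djoin a b) c.
Proof. rewrite !le_join; intros H1 H2. rewrite <- joinA, H2, H1. reflexivity. Qed.

Lemma dist_le {A : DqRA} (m x j : A) :
  dle (dmeet (djoin m x) (djoin m j)) (djoin m (dmeet x j)).
Proof.
  rewrite meet_distr. rewrite (meetC _ (djoin m x) m), meet_absorb.
  rewrite (meetC _ (djoin m x) j), meet_distr.
  apply join_lub; [apply join_ub1|]. apply join_lub.
  - eapply le_trans; [apply meet_lb2|apply join_ub1].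
  - eapply le_trans; [|apply join_ub2]. rewrite meetC. apply le_refl.
Qed.

Lemma mul_monol {A : DqRA} (a a' b : A) : dle a a' -> dle (dmul a b) (dmul a' b).
Proof. intro H. apply (resid1 _ a b). apply (le_trans _ _ _ H).
  apply (resid1 _ a' b). apply le_refl. Qed.

Lemma mul_monor {A : DqRA} (a b b' : A) : dle b b' -> dle (dmul a b) (dmul a b').
Proof. intro H. apply (resid2 _ a b). apply (le_trans _ _ _ H).
  apply (resid2 _ a b'). apply le_refl. Qed.

Lemma tl_mi {A : DqRA} (c : A) : dtl (dmi c) = c.
Proof. pose proof (fun b => resid2 _ (done A) b c) as H.
  apply le_antisym.
  - specialize (H (dtl (dmi c))). rewrite mul1l, mul1r in H. apply H. apply le_refl.
  - specialize (H c). rewrite mul1l, mul1r in H. apply H. apply le_refl.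
Qed.

Lemma mi_tl {A : DqRA} (c : A) : dmi (dtl c) = c.
Proof. pose proof (fun a => resid1 _ a (done A) c) as H.
  apply le_antisym.
  - specialize (H (dmi (dtl c))). rewrite mul1l, mul1r in H. apply H. apply le_refl.
  - specialize (H c). rewrite mul1l, mul1r in H. apply H. apply le_refl.
Qed.

Lemma le_tl {A : DqRA} (b y : A) : dle b (dtl y) <-> dle (dmul y b) (dtl (done A)).
Proof. pose proof (resid2 _ y b (dtl (done A))) as H. rewrite mi_tl, mul1l in H.
  unfold dle in *. tauto. Qed.

Lemma le_mi {A : DqRA} (x y : A) : dle x (dmi y) <-> dle (dmul x y) (dmi (done A)).
Proof. pose proof (resid1 _ x y (dmi (done A))) as H. rewrite tl_mi, mul1r in H.
  unfold dle in *. tauto. Qed.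

Lemma tl_anti {A : DqRA} (a b : A) : dle a b -> dle (dtl b) (dtl a).
Proof. intro H. apply (proj2 (le_tl _ _)). eapply le_trans. apply mul_monol; exact H.
  apply (proj1 (le_tl _ _)), le_refl. Qed.

Lemma mi_anti {A : DqRA} (a b : A) : dle a b -> dle (dmi b) (dmi a).
Proof. intro H. apply (proj2 (le_mi _ _)). eapply le_trans. apply mul_monor; exact H.
  apply (proj1 (le_mi _ _)), le_refl. Qed.

Lemma tl_le {A : DqRA} (c a : A) : dle (dtl c) a <-> dle (dmi a) c.
Proof. split; intro H.
  - rewrite <- (mi_tl c). apply mi_anti, H.
  - rewrite <- (tl_mi a). apply tl_anti, H. Qed.

Lemma mi_le {A : DqRA} (c a : A) : dle (dmi c) a <-> dle (dtl a) c.
Proof. split; intro H.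
  - rewrite <- (tl_mi c). apply tl_anti, H.
  - rewrite <- (mi_tl a). apply mi_anti, H. Qed.

Lemma neg_anti {A : DqRA} (a b : A) : dle a b -> dle (dneg b) (dneg a).
Proof. unfold dle. intro H. rewrite <- H. rewrite neg_meet.
  apply join_ub2. Qed.

Lemma neg_le {A : DqRA} (c a : A) : dle (dneg c) a <-> dle (dneg a) c.
Proof. split; intro H.
  - rewrite <- (negK _ c). apply neg_anti, H.
  - rewrite <- (negK _ a). apply neg_anti, H. Qed.
Lemma bj_ub {A : CDqRA} (S : A -> Prop) s : S s -> dle s (bigjoin S).
Proof. apply (proj1 (bigjoinP A S)). Qed.
Lemma bj_least {A : CDqRA} (S : A -> Prop) u : (forall s, S s -> dle s u) -> dle (bigjoin S) u.
Proof. apply (proj2 (bigjoinP A S)). Qed.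
Lemma bm_lb {A : CDqRA} (S : A -> Prop) s : S s -> dle (bigmeet S) s.
Proof. apply (proj1 (bigmeetP A S)). Qed.
Lemma bm_greatest {A : CDqRA} (S : A -> Prop) l : (forall s, S s -> dle l s) -> dle l (bigmeet S).
Proof. apply (proj2 (bigmeetP A S)). Qed.

Lemma key_m {A : CDqRA} (j : A) : perfect A -> Jinf j ->
  exists m : A, ~ dle j m /\ forall x, ~ dle j x -> dle x m.
Proof.
  intros HP Hj.
  set (bs := bigjoin (fun y : A => dle y j /\ y <> j)).
  assert (Hbs : dle bs j) by (apply bj_least; intros s [H _]; exact H).
  assert (Hbsn : bs <> j).
  { intro E. destruct (Hj _ (eq_sym E)) as [_ H]. apply H; reflexivity. }
  destruct (classic (exists m : A, (Minf m /\ dle bs m) /\ ~ dle j m)) as [[m [[Hm Hbm] Hjm]]|Hn].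
  2:{ exfalso. apply Hbsn. apply le_antisym; [exact Hbs|].
      rewrite (proj2 (HP bs)). apply bm_greatest. intros s Hs.
      apply NNPP. intro C. apply Hn. exists s. auto. }
  exists m. split; [exact Hjm|].
  intros x Hx. apply NNPP. intro Hxm.
  set (ms := bigmeet (fun y : A => dle m y /\ y <> m)).
  assert (Hms : dle m ms) by (apply bm_greatest; intros s [H _]; exact H).
  assert (Hmsn : ms <> m).
  { intro E. destruct (Hm _ (eq_sym E)) as [_ H]. apply H; reflexivity. }
  assert (H1 : dle ms (djoin m x)).
  { apply bm_lb. split; [apply join_ub1|]. intro E. apply Hxm. rewrite <- E. apply join_ub2. }
  assert (H2 : dle ms (djoin m j)).
  { apply bm_lb. split; [apply join_ub1|]. intro E. apply Hjm. rewrite <- E. apply join_ub2. }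
  assert (H3 : dle (dmeet x j) m).
  { eapply le_trans; [|exact Hbm]. apply bj_ub. split; [apply meet_lb2|].
    intro E. apply Hx. rewrite <- E. apply meet_lb1. }
  apply Hmsn. apply le_antisym; [|exact Hms].
  eapply le_trans. apply meet_glb; [exact H1|exact H2].
  eapply le_trans. apply dist_le. apply join_lub; [apply le_refl|exact H3].
Qed.

Lemma kappa_spec {A : CDqRA} (j : A) : perfect A -> Jinf j ->
  forall y, dle y (kappa j) <-> ~ dle j y.
Proof.
  intros HP Hj. destruct (key_m j HP Hj) as [m [Hjm Hm]].
  assert (Hk : ~ dle j (kappa j)).
  { intro C. apply Hjm. eapply le_trans; [exact C|]. apply bj_least. exact Hm. }
  intro y; split.
  - intros Hy C. apply Hk. eapply le_trans; eassumption.
  - intro Hy. apply bj_ub. exact Hy.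
Qed.

Lemma prime {A : CDqRA} (j : A) (T : A -> Prop) : perfect A -> Jinf j ->
  dle j (bigjoin T) -> exists t, T t /\ dle j t.
Proof.
  intros HP Hj H. apply NNPP. intro C.
  assert (Hb : dle (bigjoin T) (kappa j)).
  { apply bj_least. intros s Hs. apply (kappa_spec j HP Hj). intro D. apply C; eauto. }
  apply ((proj1 (kappa_spec j HP Hj (kappa j))) (le_refl _)).
  eapply le_trans; eassumption.
Qed.

Lemma mul_join_l {A : CDqRA} (T : A -> Prop) (c : A) :
  dle (dmul (bigjoin T) c) (bigjoin (fun w => exists x, T x /\ w = dmul x c)).
Proof.
  apply (resid1 _ (bigjoin T) c). apply bj_least. intros s Hs.
  apply (resid1 _ s c). apply bj_ub. eauto.
Qed.

Lemma mul_join_r {A : CDqRA} (T : A -> Prop) (c : A) :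
  dle (dmul c (bigjoin T)) (bigjoin (fun w => exists y, T y /\ w = dmul c y)).
Proof.
  apply (resid2 _ c (bigjoin T)). apply bj_least. intros s Hs.
  apply (resid2 _ c s). apply bj_ub. eauto.
Qed.

Lemma le_ext {A : DqRA} (c d : A) : (forall a, dle c a <-> dle d a) -> c = d.
Proof. intro H. apply le_antisym; [apply H|apply H]; apply le_refl. Qed.
Lemma h_mono {A B : CDqRA} (h : A -> B) : complete_hom h ->
  forall a a', dle a a' -> dle (h a) (h a').
Proof. intros Hh a a' H. unfold dle in *. destruct Hh as [Hm _].
  rewrite <- Hm, H. reflexivity. Qed.

Lemma adj {A B : CDqRA} (h : A -> B) : complete_hom h ->
  forall b a, dle (hplus h b) a <-> dle b (h a).
Proof.
  intros Hh b a. split; intro H.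
  - eapply le_trans; [|apply (h_mono h Hh _ _ H)].
    unfold hplus. destruct Hh as (_&_&_&_&_&_&_&_&Hbm). rewrite Hbm.
    apply bm_greatest. intros s [a' [Ha' ->]]. exact Ha'.
  - apply bm_lb. exact H.
Qed.

Lemma f_unit {A B : CDqRA} (h : A -> B) : complete_hom h -> forall b, dle b (h (hplus h b)).
Proof. intros Hh b. apply (adj h Hh). apply le_refl. Qed.

Lemma f_mono {A B : CDqRA} (h : A -> B) : complete_hom h ->
  forall b b', dle b b' -> dle (hplus h b) (hplus h b').
Proof. intros Hh b b' H. apply (adj h Hh). eapply le_trans; [exact H|]. apply f_unit, Hh. Qed.

Lemma f_jinf {A B : CDqRA} (h : A -> B) : perfect B -> complete_hom h ->
  forall x, Jinf x -> Jinf (hplus h x).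
Proof.
  intros HP Hh x Hx S E.
  pose proof (f_unit h Hh x) as U. rewrite E in U.
  destruct Hh as (Hm&Hj&Hmu&H1&Ht&Hmi&Hn&Hbj&Hbm).
  rewrite Hbj in U.
  destruct (prime _ _ HP Hx U) as [t [[s [Hs ->]] Ht']].
  assert (Hfs : hplus h x = s).
  { apply le_antisym.
    - apply adj; [repeat split; assumption|exact Ht'].
    - rewrite E. apply bj_ub, Hs. }
  rewrite Hfs. exact Hs.
Qed.

Lemma f_join {A B : CDqRA} (h : A -> B) : complete_hom h ->
  forall T, hplus h (bigjoin T) = bigjoin (image (hplus h) T).
Proof.
  intros Hh T. apply le_antisym.
  - apply (adj h Hh). apply bj_least. intros t Ht.
    eapply le_trans; [apply (f_unit h Hh t)|]. apply (h_mono h Hh).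
    apply bj_ub. exists t. auto.
  - apply bj_least. intros s [t [Ht ->]]. apply (f_mono h Hh). apply bj_ub, Ht.
Qed.

Theorem mainTheorem16 (A B : CDqRA) (h : A -> B) :
  perfect A -> perfect B -> complete_hom h ->
  (* (i) h_+ : J^oo(B) -> J^oo(A) is a DqRA-frame morphism from B_+ to A_+ *)
  DqRA_frame_morphism (hplus h) /\
  (* (ii) h surjective -> h_+ is an order-embedding (w.r.t. ≼) *)
  ((forall b : B, exists a : A, h a = b) ->
     forall x y : B, Jinf x -> Jinf y -> (frle x y <-> frle (hplus h x) (hplus h y))) /\
  (* (iii) h injective -> h_+ maps J^oo(B) onto J^oo(A) *)
  ((forall a1 a2 : A, h a1 = h a2 -> a1 = a2) ->
     forall a : A, Jinf a -> exists b : B, Jinf b /\ hplus h b = a).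
Proof.
  intros HA HB Hh.
  pose proof (adj h Hh) as Adj.
  pose proof (f_jinf h HB Hh) as FJ.
  pose proof Hh as (Hm&Hj&Hmu&H1&Ht&Hmi&Hn&Hbj&Hbm).
  split; [|split].
  - split; [split; [|split; [|split; [|split; [|split; [|split]]]]]|].
    + exact FJ.
    + intros x y _ _ H. apply (f_mono h Hh), H.
    + intros x y z _ _ _ H. unfold frcomp in *. apply Adj. rewrite Hmu.
      eapply le_trans; [exact H|]. eapply le_trans.
      apply mul_monol, (f_unit h Hh). apply mul_monor, (f_unit h Hh).
    + intros z u v Hz _ _ H. unfold frcomp, frle in *.
      apply Adj in H. rewrite Hmu in H.
      rewrite (proj1 (HB (h u))) in H.
      pose proof (le_trans _ _ _ H (mul_join_l _ _)) as H'.
      destruct (prime _ _ HB Hz H') as [w [[x [[Hx Hxu] ->]] Hzw]].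
      rewrite (proj1 (HB (h v))) in Hzw.
      pose proof (le_trans _ _ _ Hzw (mul_join_r _ _)) as H''.
      destruct (prime _ _ HB Hz H'') as [w [[y [[Hy Hyv] ->]] Hzy]].
      exists x, y. repeat split; auto; apply Adj; assumption.
    + intros x Hx. unfold frtl. apply le_ext. intro a.
      rewrite Adj, tl_le, (kappa_spec x HB Hx), <- Hmi, <- Adj,
        <- (kappa_spec _ HA (FJ x Hx)), tl_le. tauto.
    + intros x Hx. unfold frmi. apply le_ext. intro a.
      rewrite Adj, mi_le, (kappa_spec x HB Hx), <- Ht, <- Adj,
        <- (kappa_spec _ HA (FJ x Hx)), mi_le. tauto.
    + intros x Hx. unfold frI. split; intros [_ H]; split.
      * apply FJ, Hx.
      * apply Adj. rewrite H1. exact H.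
      * exact Hx.
      * rewrite <- H1. apply Adj. exact H.
    + intros x Hx. unfold frneg. apply le_ext. intro a.
      rewrite Adj, neg_le, (kappa_spec x HB Hx), <- Hn, <- Adj,
        <- (kappa_spec _ HA (FJ x Hx)), neg_le. tauto.
  - intros Hs x y _ _. unfold frle. split; intro H.
    + apply (f_mono h Hh), H.
    + destruct (Hs x) as [a Ha].
      assert (E : h (hplus h x) = x).
      { apply le_antisym.
        - rewrite <- Ha. apply (h_mono h Hh). apply Adj. rewrite Ha. apply le_refl.
        - apply f_unit, Hh. }
      rewrite <- E. apply Adj, H.
  - intros Hi a Ha.
    assert (E : hplus h (h a) = a).
    { apply le_antisym.
      - apply Adj, le_refl.
      - apply bm_greatest. intros s Hs. apply Hi. unfold dle in Hs.
        rewrite Hm. exact Hs. }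
    rewrite (proj1 (HB (h a))), (f_join h Hh) in E.
    destruct (Ha _ (eq_sym E)) as [b [[Hb _] Eb]].
    exists b. auto.
Qed.
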